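(* Let $A$ be a $p\times p$ positive-semidefinite matrix. Assume $\{\lambda_{\max}(\Sigma_{i,A})\}^2/\mathrm{tr}(\Sigma_{i,A}^2)\to0$ as $p\to\infty$ for $i=1,2$, and $\limsup_{m\to\infty}\{\Delta(A)\}^2/K_1(A)<\infty$. Then $K(A)/K_1(A)=1+o(1)$ as $m\to\infty$.
   Context: Two populations on $\mathbb{R}^p$ have mean vectors $\mu_1,\mu_2$ and positive-definite covariance matrices $\Sigma_1,\Sigma_2$; sample sizes $n_1,n_2\ge4$. $\mu_A=A^{1/2}(\mu_1-\mu_2)$, $\Sigma_{i,A}=A^{1/2}\Sigma_iA^{1/2}$, $\Delta(A)=\|\mu_A\|^2$, $K_1(A)=2\sum_{i=1}^2\mathrm{tr}(\Sigma_{i,A}^2)/\{n_i(n_i-1)\}+4\mathrm{tr}(\Sigma_{1,A}\Sigma_{2,A})/(n_1n_2)$, $K_2(A)=4\sum_{i=1}^2\mu_A^T\Sigma_{i,A}\mu_A/n_i$, $K(A)=K_1(A)+K_2(A)$; $\lambda_{\max}(B)$ is the largest eigenvalue of $B$. Quantities may depend on $p,n_1,n_2$; $m=\min\{p,\min(n_1,n_2)\}$. *)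

(* Defs.v *)
From HB Require Import structures.
From mathcomp Require Import all_boot all_order all_algebra.
From mathcomp Require Import all_classical all_reals all_analysis.
Set Implicit Arguments. Unset Strict Implicit. Unset Printing Implicit Defensive.
Import Order.TTheory GRing.Theory Num.Theory.
Local Open Scope ring_scope.
Local Open Scope classical_set_scope.

Definition qform (R : realType) (n : nat) (B : 'M[R]_n) (x : 'cV[R]_n) : R :=
  (x^T *m B *m x) 0 0.

Definition psd (R : realType) (n : nat) (B : 'M[R]_n) : Prop :=
  B^T = B /\ forall x : 'cV[R]_n, 0 <= qform B x.

Definition pd (R : realType) (n : nat) (B : 'M[R]_n) : Prop :=
  B^T = B /\ forall x : 'cV[R]_n, x != 0 -> 0 < qform B x.

Definition is_psd_sqrt (R : realType) (n : nat) (A Ah : 'M[R]_n) : Prop :=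
  psd Ah /\ Ah *m Ah = A.

(* largest eigenvalue (of a real symmetric matrix: sup of its finitely many
   real eigenvalues) *)
Definition lambda_max (R : realType) (n : nat) (B : 'M[R]_n) : R :=
  sup [set a : R | eigenvalue B a].

Definition SigmaA (R : realType) (n : nat) (Ah S : 'M[R]_n) : 'M[R]_n :=
  Ah *m S *m Ah.

Definition muA (R : realType) (n : nat) (Ah : 'M[R]_n) (mu1 mu2 : 'cV[R]_n)
  : 'cV[R]_n := Ah *m (mu1 - mu2).

Definition DeltaA (R : realType) (n : nat) (Ah : 'M[R]_n) (mu1 mu2 : 'cV[R]_n)
  : R := ((muA Ah mu1 mu2)^T *m muA Ah mu1 mu2) 0 0.

Definition K1A (R : realType) (n : nat) (Ah S1 S2 : 'M[R]_n) (n1 n2 : nat) : R :=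
  2 * \tr (SigmaA Ah S1 *m SigmaA Ah S1) / (n1 * (n1 - 1))%:R
  + 2 * \tr (SigmaA Ah S2 *m SigmaA Ah S2) / (n2 * (n2 - 1))%:R
  + 4 * \tr (SigmaA Ah S1 *m SigmaA Ah S2) / (n1 * n2)%:R.

Definition K2A (R : realType) (n : nat) (Ah S1 S2 : 'M[R]_n)
  (mu1 mu2 : 'cV[R]_n) (n1 n2 : nat) : R :=
  4 * (qform (SigmaA Ah S1) (muA Ah mu1 mu2) / n1%:R
       + qform (SigmaA Ah S2) (muA Ah mu1 mu2) / n2%:R).

Definition KA (R : realType) (n : nat) (Ah S1 S2 : 'M[R]_n)
  (mu1 mu2 : 'cV[R]_n) (n1 n2 : nat) : R :=
  K1A Ah S1 S2 n1 n2 + K2A Ah S1 S2 mu1 mu2 n1 n2.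

(* Main.v *)
Require Import Defs.
From HB Require Import structures.
From mathcomp Require Import all_boot all_order all_algebra.
From mathcomp Require Import all_classical all_reals all_analysis.
Import Order.TTheory GRing.Theory Num.Theory.
Import numFieldNormedType.Exports.
Local Open Scope ring_scope.
Local Open Scope classical_set_scope.

From mathcomp Require Import complex spectral sesquilinear.
From mathcomp Require Import ring lra.

Section Spec.
Local Open Scope sesquilinear_scope.
Variable R : realType.
Local Notation C := (R[i]).
Local Notation emb := (real_complex R).

Lemma spectral_real n (S : 'M[R]_n) : S^T = S ->
  exists (P : 'M[C]_n) (d : 'I_n -> R),
   [/\ P *m P^t* = 1%:M, P^t* *m P = 1%:M,
   map_mx emb S = P^t* *m diag_mx (\row_i (d i)%:C)%C *m P &
   (forall i, eigenvalue S (d i))].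
Proof.
move=> Ssym.
set Sc := map_mx emb S.
have herm : Sc \is hermsymmx.
  apply/is_hermitianmxP; rewrite expr0 scale1r.
  apply/matrixP=> i j; rewrite !mxE.
  have -> : S j i = S^T i j by rewrite mxE.
  by rewrite Ssym; symmetry; apply: conjc_real.
have Ereal := hermitian_spectral_diag_real herm.
have /orthomx_spectralP E := hermitian_normalmx herm.
set P := spectralmx Sc in E.
set D := spectral_diag Sc in E Ereal.
have PU : P *m P^t* = 1%:M by apply/unitarymxP; apply: spectral_unitarymx.
have PU' : P^t* *m P = 1%:M by apply: mulmx1C.
have invP : invmx P = P^t* by apply: invmx_unitary; apply: spectral_unitarymx.
have Dd : forall i, ((complex.Re (D 0 i))%:C)%C = D 0 i.
  by move=> i; apply: RRe_real; move/mxOverP: Ereal; apply.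
have DE : (\row_i ((complex.Re (D 0 i))%:C)%C) = D.
  by apply/rowP => i; rewrite mxE Dd.
exists P, (fun i => complex.Re (D 0 i)); split => //.
  by rewrite DE -invP.
move=> i.
rewrite eigenvalue_root_char -(fmorph_root emb) map_char_poly -eigenvalue_root_char.
suff H : eigenvalue Sc (D 0 i) by move: H; rewrite -Dd.
apply/eigenvalueP; exists (row i P).
  rewrite -row_mul E invP !mulmxA PU mul1mx mul_diag_mx.
  by apply/rowP => j; rewrite !mxE.
apply/eqP => r0.
have := congr1 (fun M : 'M[C]_n => M i i) PU.
rewrite -[P *m _]/(P *m P^t*) .
rewrite !mxE eqxx /=.
have -> : \sum_j P i j * P^t* j i = 0.
  apply: big1 => j _.
  have : row i P 0 j = 0 by rewrite r0 mxE.
  by rewrite mxE => ->; rewrite mul0r.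
by move/eqP; rewrite eq_sym oner_eq0.
Qed.

Lemma quad_diag n (u e : 'rV[C]_n) :
  (u *m diag_mx e *m u^t*) 0 0 = \sum_j e 0 j * (u 0 j * Num.conj (u 0 j)).
Proof.
rewrite mul_mx_diag !mxE; apply: eq_bigr => j _; rewrite !mxE.
by rewrite mulrCA mulrA.
Qed.

Lemma quad_id n (u : 'rV[C]_n) :
  (u *m u^t*) 0 0 = \sum_j (u 0 j * Num.conj (u 0 j)).
Proof. by rewrite !mxE; apply: eq_bigr => j _; rewrite !mxE. Qed.

Lemma map_tr_real m p (v : 'M[R]_(m,p)) :
  map_mx emb v^T = (map_mx emb v)^t*.
Proof. by apply/matrixP => i j; rewrite !mxE; symmetry; apply: conjc_real. Qed.

Lemma conj_tr_mul m p q (A : 'M[C]_(m,p)) (B : 'M[C]_(p,q)) :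
  (A *m B)^t* = B^t* *m A^t*.
Proof. by rewrite trmx_mul map_mxM. Qed.

Lemma ray_row n (S : 'M[R]_n) (P : 'M[C]_n) (d : 'I_n -> R) (lam : R) :
  P^t* *m P = 1%:M ->
  map_mx emb S = P^t* *m diag_mx (\row_i (d i)%:C)%C *m P ->
  (forall i, d i <= lam) ->
  forall v : 'rV[R]_n, (v *m S *m v^T) 0 0 <= lam * (v *m v^T) 0 0.
Proof.
move=> PU' E dl v.
set vc := map_mx emb v.
have e1 : ((v *m S *m v^T) 0 0)%:C%C = (vc *m map_mx emb S *m vc^t*) 0 0.
  by rewrite -map_tr_real -!map_mxM [RHS]mxE.
have e2 : ((v *m v^T) 0 0)%:C%C = (vc *m vc^t*) 0 0.
  by rewrite -map_tr_real -!map_mxM [RHS]mxE.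
suff H : (vc *m map_mx emb S *m vc^t*) 0 0 <= lam%:C%C * (vc *m vc^t*) 0 0.
  by move: H; rewrite -e1 -e2 -rmorphM lecR.
rewrite E.
set w := vc *m P^t*.
have wt : w^t* = P *m vc^t* by rewrite conj_tr_mul trmxCK.
have -> : vc *m (P^t* *m diag_mx (\row_i (d i)%:C)%C *m P) *m vc^t*
   = w *m diag_mx (\row_i (d i)%:C)%C *m w^t*.
  by rewrite wt !mulmxA.
have -> : vc *m vc^t* = w *m w^t*.
  by rewrite wt !mulmxA -(mulmxA vc) PU' mulmx1.
rewrite quad_diag quad_id mulr_sumr; apply: ler_sum => j _.
rewrite mxE; apply: ler_wpM2r; first exact: mul_conjC_ge0.
by rewrite lecR.
Qed.

Lemma sumsq_pos n (v : 'rV[R]_n) : v != 0 -> 0 < (v *m v^T) 0 0.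
Proof.
move=> v0; rewrite mxE lt_def; apply/andP; split; last first.
  by apply: sumr_ge0 => j _; rewrite mxE -expr2 sqr_ge0.
apply: contra v0.
rewrite psumr_eq0; last by move=> j _; rewrite mxE -expr2 sqr_ge0.
move=> /allP H; apply/eqP/rowP => j; rewrite mxE.
have := H j (mem_index_enum j); rewrite mxE -expr2 sqrf_eq0 => /eqP.
by [].
Qed.

Lemma eig_quad n (S : 'M[R]_n) a : eigenvalue S a ->
  exists2 v : 'rV[R]_n, v != 0 & (v *m S *m v^T) 0 0 = a * (v *m v^T) 0 0.
Proof.
move=> /eigenvalueP [v E v0]; exists v => //.
by rewrite E -scalemxAl mxE.
Qed.

Lemma lambda_max_spec n (S : 'M[R]_n) : S^T = S -> (0 < n)%N ->
  exists lam, [/\ eigenvalue S lam, lambda_max S = lam &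
     forall v : 'rV[R]_n, (v *m S *m v^T) 0 0 <= lam * (v *m v^T) 0 0].
Proof.
move=> Ssym n0.
have [P [d [PU PU' E eig]]] := @spectral_real n S Ssym.
have [j _ jmax] := @arg_maxP _ R _ (Ordinal n0) xpredT d erefl.
have ray := @ray_row n S P d (d j) PU' E (fun i => jmax i erefl).
set lam := d j in ray.
have ub : ubound [set a | eigenvalue S a] lam.
  move=> a /= /eig_quad [v v0 va].
  have := ray v; rewrite va ler_pM2r //; exact: sumsq_pos.
have lin : eigenvalue S lam by exact: eig.
exists lam; split => //.
apply/eqP; rewrite eq_le; apply/andP; split.
  by apply: ge_sup => //; exists lam.
apply: sup_upper_bound => //; split; first by exists lam.
by exists lam.
Qed.

Lemma rayleigh n (S : 'M[R]_n) (x : 'cV[R]_n) : S^T = S -> (0 < n)%N ->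
  qform S x <= lambda_max S * (x^T *m x) 0 0.
Proof.
move=> Ssym n0; have [lam [_ -> ray]] := @lambda_max_spec n S Ssym n0.
by have := ray x^T; rewrite trmxK.
Qed.

Lemma psd_eig_ge0 n (S : 'M[R]_n) a : psd S -> eigenvalue S a -> 0 <= a.
Proof.
move=> [_ Spos] /eig_quad [v v0 va].
have := Spos v^T; rewrite /qform trmxK va pmulr_lge0 //; exact: sumsq_pos.
Qed.

Lemma tr_emb n (M : 'M[R]_n) : ((\tr M)%:C)%C = \tr (map_mx emb M).
Proof. by rewrite /mxtrace rmorph_sum; apply: eq_bigr => i _; rewrite mxE. Qed.

Lemma tr_psd_ge0 n (S1 S2 : 'M[R]_n) : psd S1 -> psd S2 -> 0 <= \tr (S1 *m S2).
Proof.
move=> h1 h2.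
have [P [d [PU PU' E1 eig1]]] := @spectral_real n S1 h1.1.
have [Q [e [QU QU' E2 eig2]]] := @spectral_real n S2 h2.1.
have d0 i : 0 <= d i by apply: psd_eig_ge0 h1 (eig1 i).
have e0 i : 0 <= e i by apply: psd_eig_ge0 h2 (eig2 i).
suff H : 0 <= \tr (map_mx emb (S1 *m S2)).
  by move: H; rewrite -tr_emb ler0c.
rewrite map_mxM E1 E2.
set D := diag_mx _; set F := diag_mx _.
rewrite -!mulmxA mxtrace_mulC -!mulmxA.
set M := P *m Q^t*.
have Mt : M^t* = Q *m P^t* by rewrite conj_tr_mul trmxCK.
have -> : P *m (Q^t* *m (F *m (Q *m P^t*))) = M *m F *m M^t*.
  by rewrite Mt !mulmxA.
rewrite mul_diag_mx /mxtrace; apply: sumr_ge0 => i _.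
rewrite !mxE; apply: mulr_ge0; first by rewrite ler0c.
rewrite /F mul_mx_diag; apply: sumr_ge0 => j _; rewrite !mxE.
by rewrite mulrAC; apply: mulr_ge0; [exact: mul_conjC_ge0 | rewrite ler0c].
Qed.
End Spec.

Lemma key (R : realType) (t1 t2 t12 q1 q2 l1 l2 D N1 N2 C : R) :
  0 < t1 -> 0 < t2 -> 0 <= t12 -> 0 <= q1 -> 0 <= q2 ->
  q1 <= l1 * D -> q2 <= l2 * D -> 0 <= D -> 4 <= N1 -> 4 <= N2 ->
  let K1 := 2 * t1 / (N1 * (N1 - 1)) + 2 * t2 / (N2 * (N2 - 1)) + 4 * t12 / (N1 * N2) in
  let K2 := 4 * (q1 / N1 + q2 / N2) in
  D ^+ 2 / K1 <= C ->
  [/\ 0 < K1, 0 <= K2 / K1 &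
     (K2 / K1) ^+ 2 <= 16 * C * (l1 ^+ 2 / t1 + l2 ^+ 2 / t2)].
Proof.
move=> t1p t2p t12p q1p q2p q1l q2l Dp N1p N2p K1 K2 HC.
have bnd : forall t N : R, 0 < t -> 4 <= N ->
   [/\ 0 < t / (N * (N - 1)), 0 < N & t / N ^+ 2 <= t / (N * (N - 1))].
  move=> t N tp Np; have N0 : 0 < N by lra.
  have N1' : 0 < N * (N - 1) by apply: mulr_gt0; lra.
  split => //; first exact: divr_gt0.
  apply: ler_wpM2l; first lra.
  rewrite lef_pV2 ?posrE ?exprn_gt0 //.
  by rewrite expr2 ler_pM2l //; lra.
have [b1p N1g tb1] := bnd _ _ t1p N1p.
have [b2p N2g tb2] := bnd _ _ t2p N2p.
set b1 := t1 / _ in b1p tb1; set b2 := t2 / _ in b2p tb2.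
have c0 : 0 <= 4 * t12 / (N1 * N2).
  by apply: divr_ge0; [lra | apply: mulr_ge0; lra].
have K1e : K1 = 2 * b1 + 2 * b2 + 4 * t12 / (N1 * N2) by rewrite /K1 /b1 /b2 !mulrA.
have K1p : 0 < K1 by rewrite K1e; lra.
have HD : D ^+ 2 <= C * K1 by rewrite -ler_pdivrMr.
have ai : forall q l t N b : R, 0 <= q -> q <= l * D -> 0 < t -> 0 < N ->
    t / N ^+ 2 <= b -> b <= K1 / 2 ->
    (q / N) ^+ 2 <= l ^+ 2 / t * (K1 / 2 * (C * K1)).
  move=> q l t N b q0 ql t0 N0 tb bK.
  have r0 : 0 <= l ^+ 2 / t by apply: divr_ge0; [exact: sqr_ge0 | lra].
  have e : (l * D / N) ^+ 2 = l ^+ 2 / t * (t / N ^+ 2) * D ^+ 2.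
    by field; apply/andP; split; rewrite gt_eqF.
  apply: (le_trans (y := (l * D / N) ^+ 2)).
    have h1 : 0 <= q / N by apply: divr_ge0; lra.
    have h2 : q / N <= l * D / N by rewrite ler_pM2r // invr_gt0.
    nra.
  rewrite e -mulrA; apply: ler_wpM2l => //.
  apply: (le_trans (y := K1 / 2 * D ^+ 2)).
    by apply: ler_wpM2r; [exact: sqr_ge0 | lra].
  by apply: ler_wpM2l; lra.
have a1 := ai _ _ _ _ _ q1p q1l t1p N1g tb1 (ltac:(lra)).
have a2 := ai _ _ _ _ _ q2p q2l t2p N2g tb2 (ltac:(lra)).
have a1p : 0 <= q1 / N1 by apply: divr_ge0; lra.
have a2p : 0 <= q2 / N2 by apply: divr_ge0; lra.
split => //.
  by apply: divr_ge0; [rewrite /K2; lra | lra].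
rewrite expr_div_n ler_pdivrMr ?exprn_gt0 //.
set x1 := q1 / N1 in a1 a1p; set x2 := q2 / N2 in a2 a2p.
set r1 := l1 ^+ 2 / t1 in a1; set r2 := l2 ^+ 2 / t2 in a2.
have eK2 : K2 = 4 * (x1 + x2) by [].
have sq := sqr_ge0 (x1 - x2).
have : K2 ^+ 2 <= 32 * (x1 ^+ 2 + x2 ^+ 2) by rewrite eK2; nra.
rewrite -/r1 -/r2; move: a1 a2; nra.
Qed.


Section Main.
Variable R : realType.

Lemma sumsq_ge0 {n} (v : 'rV[R]_n) : 0 <= (v *m v^T) 0 0.
Proof. by rewrite mxE; apply: sumr_ge0 => j _; rewrite mxE -expr2 sqr_ge0. Qed.

Lemma tr_pos_n {n} (M : 'M[R]_n) : 0 < \tr M -> (0 < n)%N.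
Proof. by case: n M => [|n] M //; rewrite /mxtrace big_ord0 ltxx. Qed.

Lemma SigmaA_sym {n} (Ah S : 'M[R]_n) : Ah^T = Ah -> S^T = S -> (SigmaA Ah S)^T = SigmaA Ah S.
Proof. by move=> h1 h2; rewrite /SigmaA !trmx_mul h1 h2 mulmxA. Qed.

Lemma SigmaA_psd {n} (Ah S : 'M[R]_n) : Ah^T = Ah -> pd S -> psd (SigmaA Ah S).
Proof.
move=> h1 [h2 h3]; split; first exact: SigmaA_sym.
move=> x.
have -> : qform (SigmaA Ah S) x = qform S (Ah *m x).
  by rewrite /qform /SigmaA trmx_mul h1 !mulmxA.
have [->|x0] := eqVneq (Ah *m x) 0.
  by rewrite /qform mulmx0 mxE.
exact/ltW/h3.
Qed.

Lemma perk {n} (S1 S2 A Ah : 'M[R]_n) (mu1 mu2 : 'cV[R]_n) (n1 n2 : nat) (C : R) :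
  pd S1 -> pd S2 -> (4 <= n1)%N -> (4 <= n2)%N -> is_psd_sqrt A Ah ->
  0 < \tr (SigmaA Ah S1 *m SigmaA Ah S1) ->
  0 < \tr (SigmaA Ah S2 *m SigmaA Ah S2) ->
  DeltaA Ah mu1 mu2 ^+ 2 / K1A Ah S1 S2 n1 n2 <= C ->
  [/\ 0 <= K2A Ah S1 S2 mu1 mu2 n1 n2 / K1A Ah S1 S2 n1 n2,
      (K2A Ah S1 S2 mu1 mu2 n1 n2 / K1A Ah S1 S2 n1 n2) ^+ 2 <=
        16 * C * (lambda_max (SigmaA Ah S1) ^+ 2 / \tr (SigmaA Ah S1 *m SigmaA Ah S1)
                + lambda_max (SigmaA Ah S2) ^+ 2 / \tr (SigmaA Ah S2 *m SigmaA Ah S2)) &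
      KA Ah S1 S2 mu1 mu2 n1 n2 / K1A Ah S1 S2 n1 n2 =
        1 + K2A Ah S1 S2 mu1 mu2 n1 n2 / K1A Ah S1 S2 n1 n2].
Proof.
move=> h1 h2 n1g n2g [[Ahs _] _] t1p t2p HC.
have P1 := @SigmaA_psd n Ah S1 Ahs h1; have P2 := @SigmaA_psd n Ah S2 Ahs h2.
have n0 := tr_pos_n _ t1p.
have Dp : 0 <= DeltaA Ah mu1 mu2.
  by have := sumsq_ge0 (muA Ah mu1 mu2)^T; rewrite trmxK.
have rq (P : 'M[R]_n) : psd P -> qform P (muA Ah mu1 mu2) <= lambda_max P * DeltaA Ah mu1 mu2.
  by move=> [Ps _]; apply: rayleigh.
have N1 : (4 : R) <= n1%:R by rewrite (ler_nat R 4).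
have N2 : (4 : R) <= n2%:R by rewrite (ler_nat R 4).
have eK1 : K1A Ah S1 S2 n1 n2 =
   2 * \tr (SigmaA Ah S1 *m SigmaA Ah S1) / (n1%:R * (n1%:R - 1))
 + 2 * \tr (SigmaA Ah S2 *m SigmaA Ah S2) / (n2%:R * (n2%:R - 1))
 + 4 * \tr (SigmaA Ah S1 *m SigmaA Ah S2) / (n1%:R * n2%:R).
  rewrite /K1A !natrM !natrB //; by apply: leq_trans n1g || apply: leq_trans n2g.
have := @key R _ _ _ _ _ _ _ _ _ _ _ t1p t2p (@tr_psd_ge0 R n _ _ P1 P2) (P1.2 _) (P2.2 _) (rq _ P1) (rq _ P2) Dp N1 N2.
rewrite /= -eK1 => /(_ C HC) [K1p K2p Hsq].
split => //.
by rewrite /KA mulrDl divff // gt_eqF.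
Qed.

Lemma sq_cvg0 (f g : nat -> R) :
  (\forall k \near \oo, 0 <= f k /\ f k ^+ 2 <= g k) ->
  g @ \oo --> (0 : R) -> f @ \oo --> (0 : R).
Proof.
move=> H /cvgrPdist_lt hg; apply/cvgrPdist_lt => e e0.
have := hg (e ^+ 2) (exprn_gt0 2 e0).
apply: filterS2 H => k [f0 fg] ge.
rewrite sub0r normrN in ge; rewrite sub0r normrN ger0_norm //.
have gk : g k < e ^+ 2 by apply: le_lt_trans (ler_norm _) ge.
nra.
Qed.
End Main.

(* Asymptotics along an arbitrary sequence of problems indexed by k with
   m_k = min(p_k, min(n1_k, n2_k)) -> oo. *)
Theorem lemma1 (R : realType) (p n1 n2 : nat -> nat)
  (mu1 mu2 : forall k, 'cV[R]_(p k))
  (Sigma1 Sigma2 A Ah : forall k, 'M[R]_(p k)) :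
  (forall k, pd (Sigma1 k) /\ pd (Sigma2 k)) ->
  (forall k, (4 <= n1 k)%N /\ (4 <= n2 k)%N) ->
  (forall N : nat, \forall k \near \oo, (N <= minn (p k) (minn (n1 k) (n2 k)))%N) ->
  (forall k, psd (A k)) ->
  (forall k, is_psd_sqrt (A k) (Ah k)) ->
  (* the ratios below are well defined (tr(Sigma_{i,A}^2) > 0) eventually *)
  (\forall k \near \oo,
     0 < \tr (SigmaA (Ah k) (Sigma1 k) *m SigmaA (Ah k) (Sigma1 k)) /\
     0 < \tr (SigmaA (Ah k) (Sigma2 k) *m SigmaA (Ah k) (Sigma2 k))) ->
  ((fun k : nat => lambda_max (SigmaA (Ah k) (Sigma1 k)) ^+ 2
            / \tr (SigmaA (Ah k) (Sigma1 k) *m SigmaA (Ah k) (Sigma1 k)))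
    @ \oo --> (0 : R)) ->
  ((fun k : nat => lambda_max (SigmaA (Ah k) (Sigma2 k)) ^+ 2
            / \tr (SigmaA (Ah k) (Sigma2 k) *m SigmaA (Ah k) (Sigma2 k)))
    @ \oo --> (0 : R)) ->
  (exists C : R, \forall k \near \oo,
     DeltaA (Ah k) (mu1 k) (mu2 k) ^+ 2
     / K1A (Ah k) (Sigma1 k) (Sigma2 k) (n1 k) (n2 k) <= C) ->
  ((fun k : nat => KA (Ah k) (Sigma1 k) (Sigma2 k) (mu1 k) (mu2 k) (n1 k) (n2 k)
            / K1A (Ah k) (Sigma1 k) (Sigma2 k) (n1 k) (n2 k))
    @ \oo --> (1 : R)).
Proof.
Proof.
move=> hpd hn _ _ hAh htr hr1 hr2 [C hC].
set f := fun k => K2A (Ah k) (Sigma1 k) (Sigma2 k) (mu1 k) (mu2 k) (n1 k) (n2 k)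
            / K1A (Ah k) (Sigma1 k) (Sigma2 k) (n1 k) (n2 k).
set r1 := fun k : nat => lambda_max (SigmaA (Ah k) (Sigma1 k)) ^+ 2
            / \tr (SigmaA (Ah k) (Sigma1 k) *m SigmaA (Ah k) (Sigma1 k)) in hr1.
set r2 := fun k : nat => lambda_max (SigmaA (Ah k) (Sigma2 k)) ^+ 2
            / \tr (SigmaA (Ah k) (Sigma2 k) *m SigmaA (Ah k) (Sigma2 k)) in hr2.
have ev : \forall k \near \oo, [/\ 0 <= f k, f k ^+ 2 <= 16 * C * (r1 k + r2 k) &
   KA (Ah k) (Sigma1 k) (Sigma2 k) (mu1 k) (mu2 k) (n1 k) (n2 k)
            / K1A (Ah k) (Sigma1 k) (Sigma2 k) (n1 k) (n2 k) = 1 + f k].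
  apply: filterS2 htr hC => k [t1 t2] hk.
  exact: perk (hpd k).1 (hpd k).2 (hn k).1 (hn k).2 (hAh k) t1 t2 hk.
have hg : (fun k => 16 * C * (r1 k + r2 k)) @ \oo --> (0 : R).
  rewrite -[X in _ --> X](mulr0 (16 * C)) -[X in 16 * C * X](addr0 0).
  apply: cvgM; first exact: cvg_cst.
  exact: cvgD hr1 hr2.
have hf : f @ \oo --> (0 : R).
  apply: (@sq_cvg0 R f _ _ hg); by apply: filterS ev => k [h1 h2 _]; split.
have h1f : (fun k => 1 + f k) @ \oo --> (1 : R).
  rewrite -[X in _ --> X](addr0 (1 : R)).
  apply: cvgD; first exact: cvg_cst.
  exact: hf.
apply: cvg_trans h1f; apply: near_eq_cvg.
by apply: filterS ev => k [_ _ ->].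
Qed.
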